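(* Let $n\ge 3$, $\mathbf{X}\in\{0,1\}^{n\times n}$, and let $(i_1,j_1)\neq(i_2,j_2)$ be elements of $\{1,\dots,n\}^2$ with $j_1\le j_2$. Put $i_{\min}=\min(i_1,i_2)$ and $i_{\max}=\max(i_1,i_2)$. Then $\mathbf{X}^{i_1,j_1}=\mathbf{X}^{i_2,j_2}$ if and only if all of the following hold: (1) $X_{i,j}=X_{i,j+1}$ for all $i\in[1,i_{\min}-1]\cup[i_{\max}+1,n]$ and all $j\in[j_1,j_2-1]$; (2) $X_{i,j}=X_{i+1,j}$ for all $i\in[i_{\min},i_{\max}-1]$ and all $j\in[1,j_1-1]\cup[j_2+1,n]$; (3) if $i_1\le i_2$: $X_{i,j}=X_{i+1,j+1}$ for all $i\in[i_{\min},i_{\max}-1]$ and $j\in[j_1,j_2-1]$; if $i_1>i_2$: $X_{i,j}=X_{i+1,j-1}$ for all $i\in[i_{\min},i_{\max}-1]$ and $j\in[j_1+1,j_2]$. (No other entries of $\mathbf{X}$ are constrained.)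
   Context: $X_{i,j}$ is the entry of $\mathbf{X}$ in row $i$, column $j$; $[a,b]=\{a,\dots,b\}$ (empty if $a>b$). $\mathbf{X}^{i,j}\in\{0,1\}^{(n-1)\times(n-1)}$ denotes the array obtained from $\mathbf{X}$ by deleting its $i$-th row and $j$-th column. *)

(* Defs.v *)
From mathcomp Require Import all_boot all_order all_algebra.
Set Implicit Arguments. Unset Strict Implicit. Unset Printing Implicit Defensive.

Definition minor (T : Type) (n : nat) (X : 'M[T]_n.+1) (i j : 'I_n.+1) : 'M[T]_n :=
  row' i (col' j X).

(* Main.v *)
Require Import Defs.
From mathcomp Require Import all_boot all_order all_algebra.
From mathcomp Require Import zify.

Theorem lemma3 (n : nat) (hn : 2 <= n) (X : 'M[bool]_n.+1)
    (i1 j1 i2 j2 : 'I_n.+1)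
    (hneq : (i1, j1) <> (i2, j2)) (hj : j1 <= j2) :
  let imin := minn i1 i2 in
  let imax := maxn i1 i2 in
  minor X i1 j1 = minor X i2 j2 <->
  [/\ (* (1) *)
      (forall i j j' : 'I_n.+1, (i < imin) || (imax < i) ->
         j1 <= j -> j < j2 -> val j' = (val j).+1 -> X i j = X i j'),
      (* (2) *)
      (forall i i' j : 'I_n.+1, imin <= i -> i < imax -> val i' = (val i).+1 ->
         (j < j1) || (j2 < j) -> X i j = X i' j)
    & (* (3) *)
      (if i1 <= i2 then
         forall i i' j j' : 'I_n.+1, imin <= i -> i < imax ->
           val i' = (val i).+1 -> j1 <= j -> j < j2 -> val j' = (val j).+1 ->
           X i j = X i' j'
       else
         forall i i' j j' : 'I_n.+1, imin <= i -> i < imax ->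
           val i' = (val i).+1 -> j1 < j -> j <= j2 -> val j = (val j').+1 ->
           X i j = X i' j')].
Proof.
cbv zeta.
have key : minor X i1 j1 = minor X i2 j2 <-> forall a b : 'I_n,
    X (lift i1 a) (lift j1 b) = X (lift i2 a) (lift j2 b).
  split => [H a b | H].
    by have := congr1 (fun M : 'M[bool]_n => M a b) H; rewrite /minor !mxE.
  by apply/matrixP => a b; rewrite /minor !mxE; exact: H.
rewrite key {key}.
set Y := fun r c : nat => X (inord r) (inord c).
have XY : forall (i j : 'I_n.+1), X i j = Y i j by move=> i j; rewrite /Y !inord_val.
have lY : forall (i j : 'I_n.+1) (a b : 'I_n), X (lift i a) (lift j b) = Y (bump i a) (bump j b).
  by move=> i j a b; rewrite XY.
have o1 := ltn_ord i1; have o2 := ltn_ord i2; have o3 := ltn_ord j1; have o4 := ltn_ord j2.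
case: (leqP i1 i2) => hii /=.
- split.
  + move=> K.
    have KY : forall a b x y x' y', a < n -> b < n -> bump i1 a = x -> bump j1 b = y ->
        bump i2 a = x' -> bump j2 b = y' -> Y x y = Y x' y'.
      move=> a b x y x' y' ha hb <- <- <- <-.
      by have := K (Ordinal ha) (Ordinal hb); rewrite !lY.
    split.
    * move=> i j j' /orP hi hj1 hj2 hj'; rewrite !XY hj'; have oi := ltn_ord i.
      case: hi => hi.
        symmetry; apply: (KY i j); rewrite /bump; lia.
      symmetry; apply: (KY i.-1 j); rewrite /bump; lia.
    * move=> i i' j hi1 hi2 hi' /orP hjj; rewrite !XY hi'; have oi := ltn_ord i;
      have oj := ltn_ord j.
      case: hjj => hjj.
        symmetry; apply: (KY i j); rewrite /bump; lia.
      symmetry; apply: (KY i j.-1); rewrite /bump; lia.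
    * move=> i i' j j' hi1 hi2 hi' hj1 hj2 hj'; rewrite !XY hi' hj';
      have oi := ltn_ord i; have oj := ltn_ord j.
      symmetry; apply: (KY i j); rewrite /bump; lia.
  + case=> H1 H2 H3 a b; rewrite !lY.
    have H1g : forall r r' c c', r = r' -> r <= n -> (r < minn i1 i2 \/ maxn i1 i2 < r) ->
        j1 <= c' -> c' < j2 -> c = c'.+1 -> Y r c = Y r' c'.
      move=> r r' c c' <- hr hrr hc1 hc2 ->; symmetry.
      apply: H1; rewrite ?inordK //; try lia.
    have H2g : forall r r' c c', c = c' -> c <= n -> (c < j1 \/ j2 < c) ->
        minn i1 i2 <= r' -> r' < maxn i1 i2 -> r = r'.+1 -> Y r c = Y r' c'.
      move=> r r' c c' <- hc hcc hr1 hr2 ->; symmetry.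
      apply: H2; rewrite ?inordK //; try lia.
    have H3g : forall r r' c c', 
        minn i1 i2 <= r' -> r' < maxn i1 i2 -> r = r'.+1 ->
        j1 <= c' -> c' < j2 -> c = c'.+1 -> Y r c = Y r' c'.
      move=> r r' c c' hr1 hr2 -> hc1 hc2 ->; symmetry.
      apply: H3; rewrite ?inordK //; lia.
    have oa := ltn_ord a; have ob := ltn_ord b.
    rewrite /bump; case: (leqP i1 a) => ?; case: (leqP i2 a) => ?;
      case: (leqP j1 b) => ?; case: (leqP j2 b) => ?;
    first [ (congr Y; rewrite /bump; lia)
          | (apply: H1g; rewrite /bump; lia)
          | (symmetry; apply: H1g; rewrite /bump; lia)
          | (apply: H2g; rewrite /bump; lia)
          | (symmetry; apply: H2g; rewrite /bump; lia)
          | (apply: H3g; rewrite /bump; lia)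
          | (symmetry; apply: H3g; rewrite /bump; lia) ].
- split.
  + move=> K.
    have KY : forall a b x y x' y', a < n -> b < n -> bump i1 a = x -> bump j1 b = y ->
        bump i2 a = x' -> bump j2 b = y' -> Y x y = Y x' y'.
      move=> a b x y x' y' ha hb <- <- <- <-.
      by have := K (Ordinal ha) (Ordinal hb); rewrite !lY.
    split.
    * move=> i j j' /orP hi hj1 hj2 hj'; rewrite !XY hj'; have oi := ltn_ord i.
      case: hi => hi.
        symmetry; apply: (KY i j); rewrite /bump; lia.
      symmetry; apply: (KY i.-1 j); rewrite /bump; lia.
    * move=> i i' j hi1 hi2 hi' /orP hjj; rewrite !XY hi'; have oi := ltn_ord i;
      have oj := ltn_ord j.
      case: hjj => hjj.
        apply: (KY i j); rewrite /bump; lia.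
      apply: (KY i j.-1); rewrite /bump; lia.
    * move=> i i' j j' hi1 hi2 hi' hj1 hj2 hj'; rewrite !XY hi';
      have oi := ltn_ord i; have oj := ltn_ord j.
      apply: (KY i j'); rewrite /bump; lia.
  + case=> H1 H2 H3 a b; rewrite !lY.
    have H1g : forall r r' c c', r = r' -> r <= n -> (r < minn i1 i2 \/ maxn i1 i2 < r) ->
        j1 <= c' -> c' < j2 -> c = c'.+1 -> Y r c = Y r' c'.
      move=> r r' c c' <- hr hrr hc1 hc2 ->; symmetry.
      apply: H1; rewrite ?inordK //; try lia.
    have H2g : forall r r' c c', c = c' -> c <= n -> (c < j1 \/ j2 < c) ->
        minn i1 i2 <= r' -> r' < maxn i1 i2 -> r = r'.+1 -> Y r c = Y r' c'.
      move=> r r' c c' <- hc hcc hr1 hr2 ->; symmetry.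
      apply: H2; rewrite ?inordK //; try lia.
    have H3g : forall r r' c c',
        minn i1 i2 <= r -> r < maxn i1 i2 -> r' = r.+1 ->
        j1 < c -> c <= j2 -> c = c'.+1 -> Y r c = Y r' c'.
      move=> r r' c c' hr1 hr2 -> hc1 hc2 hc.
      apply: H3; rewrite ?inordK //; lia.
    have oa := ltn_ord a; have ob := ltn_ord b.
    rewrite /bump; case: (leqP i1 a) => ?; case: (leqP i2 a) => ?;
      case: (leqP j1 b) => ?; case: (leqP j2 b) => ?;
    first [ (congr Y; rewrite /bump; lia)
          | (apply: H1g; rewrite /bump; lia)
          | (symmetry; apply: H1g; rewrite /bump; lia)
          | (apply: H2g; rewrite /bump; lia)
          | (symmetry; apply: H2g; rewrite /bump; lia)
          | (apply: H3g; rewrite /bump; lia)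
          | (symmetry; apply: H3g; rewrite /bump; lia) ].
Qed.
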